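(* Let $n=2p_{1}^{J_{1}}p_{2}^{J_{2}}\cdots p_{s}^{J_{s}}$, where $s\geq2$, $p_1,\dots,p_s$ are distinct odd primes, $J_i\ge1$, and for every $r\in\{1,\dots,s-1\}$ we have $\prod_{i=1}^{r}p_{i}^{J_{i}}<p_{r+1}$. Let $\mathcal{D}_{S_{1}},\mathcal{D}_{S_{2}}$ be subsets of $\mathcal{D}_{[n]}\setminus\{n\}$. If $\mathrm{Spec}(\mathrm{ICG}(n,\mathcal{D}_{S_{1}}))=\mathrm{Spec}(\mathrm{ICG}(n,\mathcal{D}_{S_{2}}))$, then $\mathcal{D}_{S_{1}}=\mathcal{D}_{S_{2}}$.
   Context: For an integer $n\ge1$, identify $\mathbb{Z}_n$ with $[n]=\{1,\dots,n\}$ ($n$ playing the role of $0$). For a positive divisor $d$ of $n$, $G_n(d)=\{j\in[n]:\gcd(j,n)=d\}$. $\mathcal{D}_{[n]}$ denotes the set of all positive divisors of $n$. For $\mathcal{D}\subseteq\mathcal{D}_{[n]}\setminus\{n\}$, $\mathrm{ICG}(n,\mathcal{D})$ denotes the circulant graph $\mathrm{Cay}(\mathbb{Z}_n,S)$ with connection set $S=\bigcup_{d\in\mathcal{D}}G_n(d)$ (vertex set $\mathbb{Z}_n$, $g\sim h$ iff $h-g\in S$); we write $\mathcal{D}=\mathcal{D}_S$. $\mathrm{Spec}$ denotes the multiset of eigenvalues of the adjacency matrix. *)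

(* Defs.v *)
From mathcomp Require Import all_boot all_order all_algebra all_field.
From mathcomp Require Import finmap.
Set Implicit Arguments. Unset Strict Implicit. Unset Printing Implicit Defensive.
Import GRing.Theory Num.Theory.
Local Open Scope ring_scope.

(* Vertices of Z_n are represented by 'I_n (residues 0..n-1; residue 0 plays
   the role of n).  For i j : 'I_n, j - i mod n is ((j + n - i) %% n); its gcd
   with n equals gcd(j - i, n) with the convention gcdn 0 n = n. *)
Definition diff_mod (n : nat) (i j : 'I_n) : nat := ((j + n - i) %% n)%N.

(* Adjacency matrix of ICG(n, D) = Cay(Z_n, S), S = union of G_n(d), d in D:
   g ~ h iff h - g in S iff gcd(h - g, n) in D. *)
Definition icg_adj (n : nat) (D : {fset nat}) : 'M[algC]_n :=
  \matrix_(i < n, j < n) (if gcdn (diff_mod i j) n \in D then 1 else 0).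

(* Spectrum as a multiset: multiplicity of each eigenvalue lambda in algC is its
   (algebraic) multiplicity as a root of the characteristic polynomial. *)
Definition spec_mult (n : nat) (A : 'M[algC]_n) (lambda : algC) : nat :=
  mup lambda (char_poly A).

Definition same_spec (n : nat) (A B : 'M[algC]_n) : Prop :=
  forall lambda : algC, spec_mult A lambda = spec_mult B lambda.

Definition proper_divisor_set (n : nat) (D : {fset nat}) : Prop :=
  forall d, d \in D -> (d %| n)%N /\ d != n.

(* Main.v *)
Require Import Defs.
From mathcomp Require Import all_boot all_order all_algebra all_field.
From mathcomp Require Import finmap.
From mathcomp Require Import cyclic.
From mathcomp Require Import zify ring.
Set Implicit Arguments. Unset Strict Implicit. Unset Printing Implicit Defensive.
Import Order.TTheory GRing.Theory Num.Theory.

Lemma sum_sub x N (P Q : pred nat) (F : nat -> nat) :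
  (forall y, y < x -> P y -> y < N /\ Q y) ->
  \sum_(0 <= y < x | P y) F y <= \sum_(0 <= y < N | Q y) F y.
Proof.
move=> H.
rewrite (big_nat_widen 0 x (x + N)) ?leq_addr //.
rewrite [X in _ <= X](big_nat_widen 0 N (x + N)) ?leq_addl //.
rewrite big_mkcond [X in _ <= X]big_mkcond /=; apply: leq_sum => i _.
case: (boolP (P i && (i < x))) => [/andP [Pi ix]|]; last by [].
by have [-> ->] := H i ix Pi.
Qed.

Lemma block_sum q v (g : nat -> nat) : 0 < q ->
  \sum_(v * q <= y < v * q + q | q %| y) g y = g (v * q).
Proof.
move=> q0; rewrite big_mkcond big_ltn /=; last lia.
rewrite dvdn_mull ?dvdnn //.
rewrite big_nat_cond big1 ?addn0 // => y /andP [/andP [h1 h2] _].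
case: ifP => // qy; exfalso; move: qy; rewrite /dvdn.
have -> : y = v * q + (y - v * q) by lia.
rewrite modnMDl modn_small; lia.
Qed.

Lemma mult_reindex q v (g : nat -> nat) : 0 < q ->
  \sum_(0 <= y < v * q | q %| y) g y = \sum_(0 <= u < v) g (u * q).
Proof.
move=> q0; elim: v => [|v IH]; first by rewrite mul0n !big_geq.
rewrite mulSn addnC (big_cat_nat _ (n := v * q)) ?leq_addr //= IH block_sum //.
by rewrite big_nat_recr.
Qed.

Lemma decomp M p K x : prime p -> coprime p M -> 0 < M -> x %| M * p ^ K ->
  exists v b, [/\ v %| M, b <= K & x = v * p ^ b].
Proof.
move=> pp cpM M0 xd.
have x0 : 0 < x by apply: dvdn_gt0 xd; rewrite muln_gt0 M0 expn_gt0 prime_gt0.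
have [v cpv Ex] := pfactor_coprime pp x0.
exists v, (logn p x); split => //.
- have : v %| M * p ^ K by apply: dvdn_trans xd; rewrite Ex dvdn_mulr.
  by rewrite Gauss_dvdl // coprimeXr // coprime_sym.
- have h0 : 0 < M * p ^ K by rewrite muln_gt0 M0 expn_gt0 prime_gt0.
  have := dvdn_leq_log p h0 xd.
  rewrite lognM // ?expn_gt0 ?prime_gt0 // (logn_coprime cpM) pfactorK //.
Qed.

Definition Pm m := forall x, x %| m -> \sum_(0 <= y < x | y %| m) totient y < totient x.

Lemma sum_tot_dvd N : \sum_(0 <= y < N.+1 | y %| N) totient y = N.
Proof. by rewrite big_mkord sum_totient_dvd. Qed.

Lemma Pm_step M p : 0 < M -> prime p -> M.+1 < p -> Pm M -> forall J, Pm (M * p ^ J).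
Proof.
move=> M0 pp Mp PM.
have cpM : coprime p M.
  rewrite prime_coprime //; apply/negP => /(dvdn_leq M0); lia.
have p0 : 0 < p by apply: prime_gt0.
elim=> [|J IH]; first by rewrite expn0 muln1.
move=> x xd.
have [v [b [vM bK Ex]]] := decomp pp cpM M0 xd.
have MpJ0 : 0 < M * p ^ J by rewrite muln_gt0 M0 expn_gt0 p0.
have pJ0 : 0 < p ^ J by rewrite expn_gt0 p0.
have key : forall y, y %| M * p ^ J.+1 -> ~~ (p ^ J.+1 %| y) -> y %| M * p ^ J.
  move=> y yd nq; have [u [c [uM cK Ey]]] := decomp pp cpM M0 yd.
  have cJ : c <= J.
    rewrite leqNgt; apply/negP => cJ; move: nq; rewrite Ey.
    have -> : c = J.+1 by lia.
    by rewrite dvdn_mull.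
  by rewrite Ey dvdn_mul // dvdn_exp2l.
move: bK; rewrite leq_eqVlt => /orP [/eqP bE | bJ].
  set q := p ^ J.+1.
  have q0 : 0 < q by rewrite expn_gt0 p0.
  have cMq : coprime M q by rewrite coprime_sym coprimeXl.
  rewrite (bigID (fun y => q %| y)) /=.
  have S1 : \sum_(0 <= y < x | (y %| M * q) && ~~ (q %| y)) totient y <= M * p ^ J.
    rewrite -[X in _ <= X]sum_tot_dvd; apply: sum_sub => y yx /andP [yd nq].
    have := key y yd nq => yd'; split => //; rewrite ltnS; exact: dvdn_leq.
  have S2 : \sum_(0 <= y < x | (y %| M * q) && (q %| y)) totient y =
            totient q * \sum_(0 <= u < v | u %| M) totient u.
    rewrite (eq_bigl (fun y => (q %| y) && (y %| M * q))); last by move=> y; rewrite andbC.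
    rewrite big_mkcondr Ex bE -/q mult_reindex // big_distrr /= [RHS]big_mkcond /=.
    apply: eq_bigr => u _; rewrite dvdn_pmul2r //.
    case: ifP => // uM; rewrite totient_coprime 1?mulnC //.
    exact: coprime_dvdl uM cMq.
  have T := PM v vM.
  have Ex' : x = v * q by rewrite Ex bE.
  have cvq : coprime v q by exact: coprime_dvdl vM cMq.
  rewrite S2 [in totient x]Ex' totient_coprime // totient_pfactor // /=.
  rewrite /= in S1.
  set T0 := \sum_(0 <= u < v | u %| M) totient u in T S2 *.
  set S0 := \sum_(0 <= y < x | (y %| M * q) && ~~ (q %| y)) totient y in S1 *.
  set P := p ^ J in S1 pJ0 *.
  have h1 : p.-1 * P * T0.+1 <= p.-1 * P * totient v.
    by rewrite leq_mul2l T orbT.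
  rewrite mulnS in h1.
  have h2 : M * P < p.-1 * P by rewrite ltn_pmul2r //; lia.
  rewrite [totient v * _]mulnC.
  move: h1 h2 S1; generalize (p.-1 * P * T0) (p.-1 * P) (p.-1 * P * totient v) (M * P) => X Y Z W.
  lia.
have bJ' : b <= J by lia.
have xd' : x %| M * p ^ J by rewrite Ex dvdn_mul // dvdn_exp2l.
have x0 : 0 < x by apply: dvdn_gt0 xd'.
rewrite big_nat_cond (eq_bigl (fun y => (0 <= y < x) && (y %| M * p ^ J))).
  by rewrite -big_nat_cond; apply: IH.
move=> y; case: (boolP (0 <= y < x)) => //= yx.
apply/idP/idP => yd.
  case: (boolP (p ^ J.+1 %| y)) => [qy|nq]; last exact: key.
  have y0 : 0 < y by apply: dvdn_gt0 yd; rewrite muln_gt0 M0 expn_gt0 p0.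
  have := dvdn_leq y0 qy; have := dvdn_leq MpJ0 xd'.
  rewrite expnS => h3 h4; exfalso.
  have : M * p ^ J < p * p ^ J by rewrite ltn_pmul2r //; lia.
  lia.
by apply: dvdn_trans yd _; rewrite dvdn_pmul2l // expnS dvdn_mull.
Qed.

Lemma Pm1 : Pm 1.
Proof.
move=> x; rewrite dvdn1 => /eqP ->.
by rewrite big_mkcond big_ltn // big_geq.
Qed.

Lemma Pm_prod s (p J : nat -> nat) :
  (forall i, (i < s)%N -> prime (p i) /\ odd (p i) /\ (1 <= J i)%N) ->
  (forall r, (1 <= r)%N -> (r < s)%N -> (\prod_(i < r) p i ^ J i < p r)%N) ->
  forall r, r <= s -> odd (\prod_(i < r) p i ^ J i) /\ Pm (\prod_(i < r) p i ^ J i).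
Proof.
move=> Hp Hlt; elim=> [|r IH] rs; first by rewrite big_ord0; split => //; exact: Pm1.
have [oM PM] := IH (ltnW rs).
have [pp [op _]] := Hp r rs.
rewrite big_ord_recr /=; split; first by rewrite oddM oddX op orbT oM.
have M0 : 0 < \prod_(i < r) p i ^ J i by move: oM; case: (\prod_(i < r) _).
apply: Pm_step => //.
case: r IH rs oM PM M0 pp op => [|r] _ rs oM PM M0 pp op.
  rewrite big_ord0; have := prime_gt1 pp; move: op; case: (p 0) => [|[|[|k]]] //.
have := Hlt r.+1 isT rs.
move: oM op; set M := \prod_(i < r.+1) _; set P := p r.+1 => oM op h.
rewrite ltn_neqAle h andbT; apply/negP => /eqP E.
by move: op; rewrite -E /= oM.
Qed.

Lemma sum_one K (P : pred nat) (F : nat -> nat) x :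
  x < K -> P x -> F x <= \sum_(0 <= y < K | P y) F y.
Proof.
move=> xK Px; rewrite big_mkcond (bigD1_seq x) ?mem_index_iota ?iota_uniq //= Px.
exact: leq_addr.
Qed.

Lemma gen_half K (U a b : pred nat) (w key : nat -> nat) x :
  (forall x, x < K -> U x -> \sum_(0 <= y < K | U y && (key y < key x)) w y < w x) ->
  (forall x y, x < K -> y < K -> U x -> U y -> key x = key y -> x = y) ->
  (forall x, a x -> x < K /\ U x) -> (forall x, b x -> x < K /\ U x) ->
  a x -> ~~ b x -> (forall y, key x < key y -> a y = b y) ->
  \sum_(0 <= y < K | b y) w y < \sum_(0 <= y < K | a y) w y.
Proof.
move=> Hsup Hinj Ha Hb ax nbx Hmax.
have [xK Ux] := Ha x ax.
rewrite (bigID (fun y => key x < key y)) [X in _ < X](bigID (fun y => key x < key y)) /=.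
rewrite (eq_bigl (fun y => a y && (key x < key y))); last first.
  by move=> y; case: (boolP (key x < key y)) => h; rewrite ?andbF ?andbT ?Hmax.
rewrite ltn_add2l.
have h1 : w x <= \sum_(0 <= i < K | a i && ~~ (key x < key i)) w i.
  by apply: sum_one => //; rewrite ax ltnn.
have h2 : \sum_(0 <= i < K | b i && ~~ (key x < key i)) w i <=
          \sum_(0 <= y < K | U y && (key y < key x)) w y.
  apply: sum_sub => y yK /andP [bi ki]; split => //.
  have [_ Uy] := Hb y bi; rewrite Uy /=.
  rewrite ltn_neqAle leqNgt ki andbT; apply/negP => /eqP E.
  have := Hinj _ _ yK xK Uy Ux E => yx.
  by move: bi; rewrite yx (negbTE nbx).
have := Hsup x xK Ux; lia.
Qed.

Lemma gen K (U a b : pred nat) (w key : nat -> nat) :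
  (forall x, x < K -> U x -> \sum_(0 <= y < K | U y && (key y < key x)) w y < w x) ->
  (forall x y, x < K -> y < K -> U x -> U y -> key x = key y -> x = y) ->
  (forall x, a x -> x < K /\ U x) -> (forall x, b x -> x < K /\ U x) ->
  \sum_(0 <= x < K | a x) w x = \sum_(0 <= x < K | b x) w x -> forall x, a x = b x.
Proof.
move=> Hsup Hinj Ha Hb Heq.
case: (boolP [exists y : 'I_K, a y != b y]) => [Hex|/existsPn H]; last first.
  move=> x.
  case: (ltnP x K) => xK; first by move: (H (Ordinal xK)); rewrite negbK => /eqP.
  case: (boolP (a x)) => [/Ha [h _]|]; first lia.
  case: (boolP (b x)) => [/Hb [h _]|] //; first lia.
exfalso.
pose P k := [exists y : 'I_K, (a y != b y) && (key y == k)].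
have PE : exists k, P k.
  by move: Hex => /existsP [y hy]; exists (key y); apply/existsP; exists y; rewrite hy eqxx.
have PB : forall k, P k -> k <= \max_(y < K) key y.
  move=> k /existsP [y /andP [_ /eqP <-]]; exact: leq_bigmax.
case: (ex_maxnP PE PB) => k /existsP [y /andP [ay /eqP ky]] kmax.
have Hmax : forall z, key y < key z -> a z = b z.
  move=> z kz; case: (ltnP z K) => zK.
    apply/eqP; apply/negP => /negP nz.
    have : P (key z) by apply/existsP; exists (Ordinal zK); rewrite nz eqxx.
    move/kmax; lia.
  case: (boolP (a z)) => [/Ha [h _]|]; first lia.
  case: (boolP (b z)) => [/Hb [h _]|] //; first lia.
move: ay; case: (boolP (a y)) => [ay| nay].
  case: (boolP (b y)) => // nby _.
  have := gen_half Hsup Hinj Ha Hb ay nby Hmax; rewrite Heq; lia.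
case: (boolP (b y)) => // by_ _.
have Hmax' : forall z, key y < key z -> b z = a z by move=> z /Hmax ->.
have := gen_half Hsup Hinj Hb Ha by_ nay Hmax'; rewrite Heq; lia.
Qed.
Section Alg.
Local Open Scope ring_scope.

Definition aD (n : nat) (D : {fset nat}) (t : nat) : algC :=
  if gcdn t n \in D then 1 else 0.
Definition lam (n : nat) (D : {fset nat}) (w : algC) (k : nat) : algC :=
  \sum_(t < n) aD n D t * w ^+ (t * k).

Definition shiftn n (i t : 'I_n) : 'I_n :=
  Ordinal (ltn_pmod (i + t) (leq_ltn_trans (leq0n i) (ltn_ord i))).

Lemma diff_shift n (i t : 'I_n) : diff_mod i (shiftn i t) = t.
Proof.
rewrite /diff_mod /=.
have n0 : (0 < n)%N by apply: leq_ltn_trans (ltn_ord i).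
have ti := ltn_ord t; have ii := ltn_ord i.
case: (ltnP (i + t) n) => h.
  rewrite (modn_small h).
  have -> : (i + t + n - i = t + n)%N by lia.
  by rewrite modnDr modn_small.
have -> : ((i + t) %% n = i + t - n)%N.
  have -> : (i + t = (i + t - n) + n)%N by lia.
  rewrite modnDr modn_small; lia.
have -> : (i + t - n + n - i = t)%N by lia.
by rewrite modn_small.
Qed.

Lemma shiftn_inj n (i : 'I_n) : injective (shiftn i).
Proof.
move=> t1 t2 E; have h := diff_shift i t1; rewrite E diff_shift in h.
by apply: val_inj.
Qed.

Definition Fmx n (w : algC) : 'M[algC]_n := \matrix_(i < n, k < n) w ^+ (i * k).

Lemma AF n D w : n.-primitive_root w ->
  icg_adj n D *m Fmx n w = Fmx n w *m diag_mx (\row_(k < n) lam n D w k).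
Proof.
move=> pw; apply/matrixP => i k.
rewrite mul_mx_diag !mxE (reindex_inj (@shiftn_inj n i)) /= /lam big_distrr /=.
apply: eq_bigr => t _; rewrite !mxE diff_shift.
rewrite exprM prim_expr_mod // -exprM mulnDl exprD /aD.
by case: ifP => _; rewrite ?mul0r ?mulr0 // !mul1r.
Qed.

Lemma detF_neq0 n w : n.-primitive_root w -> \det (Fmx n w) != 0.
Proof.
move=> pw.
have -> : Fmx n w = Vandermonde n (\row_(k < n) w ^+ k).
  by apply/matrixP => i k; rewrite !mxE -exprM mulnC.
rewrite det_Vandermonde; apply/prodf_neq0 => i _; apply/prodf_neq0 => j ij.
rewrite !mxE subr_eq0 (eq_prim_root_expr pw) !modn_small //.
by apply/negP => /eqP /val_inj E; move: ij; rewrite E ltnn.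
Qed.

Lemma icg_charpoly n D w : n.-primitive_root w ->
  char_poly (icg_adj n D) = \prod_(k < n) ('X - (lam n D w k)%:P).
Proof.
move=> pw.
set A := icg_adj n D; set F := Fmx n w; set Dg := diag_mx (\row_(k < n) lam n D w k).
have E : char_poly_mx A *m map_mx polyC F = map_mx polyC F *m char_poly_mx Dg.
  rewrite /char_poly_mx mulmxBl mulmxBr -scalar_mxC -!map_mxM AF //.
have dF : \det (map_mx polyC F) != 0 by rewrite det_map_mx polyC_eq0 detF_neq0.
have := congr1 determinant E; rewrite !det_mulmx [X in _ = X]mulrC => /(mulIf dF).
rewrite -/(char_poly A) -/(char_poly Dg) => ->.
rewrite char_poly_trig ?diag_mx_is_trig //; apply: eq_bigr => k _.
by rewrite !mxE eqxx.
Qed.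

Lemma mup_count n D w v : n.-primitive_root w ->
  mup v (char_poly (icg_adj n D)) = (\sum_(0 <= k < n) (lam n D w k == v))%N.
Proof.
move=> pw; rewrite (icg_charpoly D pw).
rewrite -(big_mkord xpredT (fun k => 'X - (lam n D w k)%:P)).
rewrite -(big_map (lam n D w) xpredT (fun x => 'X - x%:P)) mu_prod_XsubC count_map.
rewrite -sum1_count big_mkcond /=.
by apply: eq_bigr => k _; case: ifP.
Qed.

Lemma normw n (w : algC) : (0 < n)%N -> n.-primitive_root w -> `|w| = 1.
Proof.
move=> n0 pw; apply/eqP; rewrite -(@pexpr_eq1 _ _ n n0) // -normrX prim_expr_order //.
by rewrite normr1.
Qed.

Lemma lam0 n D w : lam n D w 0 = (\sum_(0 <= t < n) (gcdn t n \in D))%:R.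
Proof.
rewrite big_mkord natr_sum /lam; apply: eq_bigr => t _.
by rewrite muln0 expr0 mulr1 /aD; case: ifP.
Qed.

Lemma lam_norm n D w k : (0 < n)%N -> n.-primitive_root w ->
  `|lam n D w k| <= lam n D w 0.
Proof.
move=> n0 pw; apply: le_trans (ler_norm_sum _ _ _) _.
apply: ler_sum => t _; rewrite normrM normrX (normw n0 pw) expr1n mulr1 muln0 expr0 mulr1.
by rewrite /aD; case: ifP; rewrite ?normr1 ?normr0.
Qed.

Lemma lam_half n D w h : n = (2 * h)%N -> (0 < h)%N -> n.-primitive_root w ->
  lam n D w h = (\sum_(0 <= t < n) ((gcdn t n \in D) && ~~ odd t))%:R
              - (\sum_(0 <= t < n) ((gcdn t n \in D) && odd t))%:R.
Proof.
move=> En h0 pw.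
have wh : w ^+ h = -1.
  have : (w ^+ h) ^+ 2 == 1 by rewrite -exprM mulnC -En prim_expr_order.
  rewrite sqrf_eq1 => /orP [|/eqP //].
  rewrite -[X in _ == X](expr0 w) (eq_prim_root_expr pw) mod0n modn_small; last lia.
  by move/eqP => E; move: h0; rewrite E.
rewrite !big_mkord !natr_sum -sumrB /lam; apply: eq_bigr => t _.
rewrite mulnC exprM wh -signr_odd /aD.
by case: ifP => _; case: (odd t) => /=; rewrite ?expr1 ?expr0 ?mulr1 ?mul1r ?mul0r ?subr0 ?sub0r.
Qed.

Definition negn n (t : 'I_n) : 'I_n :=
  Ordinal (ltn_pmod (n - t) (leq_ltn_trans (leq0n t) (ltn_ord t))).

Lemma negnK n : involutive (@negn n).
Proof.
move=> t; apply: val_inj => /=.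
have ti := ltn_ord t.
case: (posnP t) => [t0|tp].
  by rewrite t0 subn0 modnn subn0 modnn.
rewrite (@modn_small (n - t)); last lia.
have -> : (n - (n - t) = t)%N by lia.
by rewrite modn_small.
Qed.

Lemma gcd_neg n x : (x <= n)%N -> gcdn (n - x) n = gcdn x n.
Proof.
move=> xn.
have L : gcdn (n - x) (n - x + x) = gcdn x (n - x) by rewrite gcdnDl gcdnC.
have R : gcdn x (x + (n - x)) = gcdn x (n - x) by rewrite gcdnDl.
have E1 : (n - x + x = n)%N by lia.
have E2 : (x + (n - x) = n)%N by lia.
by rewrite E1 in L; rewrite E2 in R; rewrite L R.
Qed.

Lemma mod_neg n t k : (t <= n)%N -> (k <= n)%N ->
  ((n - t) * (n - k) + (t + k) * n = n * n + t * k)%N.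
Proof. move=> tn kn; nia. Qed.

Lemma lam_sym n D w k : (0 < k < n)%N -> n.-primitive_root w ->
  lam n D w (n - k) = lam n D w k.
Proof.
move=> kn pw; rewrite /lam (reindex_inj (inv_inj (@negnK n))) /=.
apply: eq_bigr => t _.
have ti := ltn_ord t.
congr (_ * _).
  by rewrite /aD gcdn_modl gcd_neg // ltnW.
apply/eqP; rewrite (eq_prim_root_expr pw) modnMml.
apply/eqP; rewrite -(modnMDl (t + k)) -(modnMDl n (t * k)).
rewrite [X in X = _ %[mod n]]addnC mod_neg //; [exact: ltnW | by case/andP: kn => _ /ltnW].
Qed.

End Alg.

Lemma sum_sym h (f : nat -> nat) : 0 < h ->
  (forall k, 0 < k < h -> f (2 * h - k) = f k) ->
  \sum_(0 <= k < 2 * h) f k = f 0 + f h + 2 * \sum_(1 <= k < h) f k.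
Proof.
move=> h0 Hs.
rewrite big_ltn; last lia.
rewrite (big_cat_nat _ (n := h)) //=; last lia.
rewrite [X in _ + (_ + X)]big_ltn; last lia.
have -> : \sum_(h.+1 <= i < 2 * h) f i = \sum_(1 <= k < h) f k.
  have -> : h.+1 = 1 + h by lia.
  rewrite big_addn.
  have -> : 2 * h - h = h by lia.
  rewrite big_nat_rev /=.
  apply: eq_big_nat => k /andP [k1 kh].
  rewrite -(Hs k); last lia.
  congr f; lia.
lia.
Qed.

Lemma sum_pos_ex n (P : pred nat) : 0 < \sum_(0 <= k < n) P k -> exists k, k < n /\ P k.
Proof.
move=> H; case: (boolP [exists k : 'I_n, P k]) => [/existsP [k Pk]|/existsPn N].
  by exists k.
exfalso; move: H; rewrite big_mkord big1 // => k _.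
by rewrite (negbTE (N k)).
Qed.

Section Spec.
Local Open Scope ring_scope.

Definition cntE n (D : {fset nat}) := (\sum_(0 <= t < n) ((gcdn t n \in D) && ~~ odd t))%N.
Definition cntO n (D : {fset nat}) := (\sum_(0 <= t < n) ((gcdn t n \in D) && odd t))%N.

Lemma cnt_split n D : (\sum_(0 <= t < n) (gcdn t n \in D))%N = (cntE n D + cntO n D)%N.
Proof.
rewrite /cntE /cntO -big_split /=; apply: eq_bigr => t _.
by case: (gcdn t n \in D); case: (odd t).
Qed.

Lemma spec_EO n h D1 D2 : n = (2 * h)%N -> (0 < h)%N ->
  same_spec (icg_adj n D1) (icg_adj n D2) ->
  cntE n D1 = cntE n D2 /\ cntO n D1 = cntO n D2.
Proof.
move=> En h0 Hsp.
have n0 : (0 < n)%N by lia.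
have [w pw] := C_prim_root_exists n0.
have Hc : forall v, (\sum_(0 <= k < n) (lam n D1 w k == v) = \sum_(0 <= k < n) (lam n D2 w k == v))%N.
  by move=> v; rewrite -!mup_count //; apply: Hsp.
have Hpar : forall D v, (\sum_(0 <= k < n) (lam n D w k == v) =
   (lam n D w 0 == v) + (lam n D w h == v) + 2 * \sum_(1 <= k < h) (lam n D w k == v))%N.
  move=> D v; rewrite En sum_sym // => k kh.
  by rewrite -En lam_sym //; lia.
have Hex : forall D1 D2, (forall v, (\sum_(0 <= k < n) (lam n D1 w k == v) = \sum_(0 <= k < n) (lam n D2 w k == v))%N) ->
     lam n D1 w 0 <= lam n D2 w 0.
  move=> E1 E2 H.
  have : (0 < \sum_(0 <= k < n) (lam n E2 w k == lam n E1 w 0))%N.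
    by rewrite -H big_ltn // eqxx.
  move/sum_pos_ex => [k [kn /eqP Ek]].
  rewrite -Ek.
  have -> : lam n E2 w k = `|lam n E2 w k| by rewrite Ek lam0 normr_nat.
  exact: lam_norm.
have Ea : lam n D1 w 0 = lam n D2 w 0.
  by apply: le_anti; apply/andP; split; apply: Hex => v.
have Eb : lam n D1 w h = lam n D2 w h.
  have := Hc (lam n D1 w h); rewrite !Hpar Ea eqxx.
  case: (boolP (lam n D2 w h == lam n D1 w h)) => [/eqP //|_]; lia.
rewrite !lam0 !cnt_split in Ea.
rewrite (lam_half D1 En h0 pw) (lam_half D2 En h0 pw) in Eb.
have : ((cntE n D1 + cntE n D1)%:R = (cntE n D2 + cntE n D2)%:R :> algC).
  apply/eqP; rewrite -subr_eq0.
  have -> : (cntE n D1 + cntE n D1)%:R - (cntE n D2 + cntE n D2)%:R =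
    ((cntE n D1 + cntO n D1)%:R - (cntE n D2 + cntO n D2)%:R) +
    (((cntE n D1)%:R - (cntO n D1)%:R) - ((cntE n D2)%:R - (cntO n D2)%:R)) :> algC.
    by rewrite !natrD; ring.
  by rewrite Ea Eb !subrr addr0.
move/eqP; rewrite eqr_nat => /eqP E.
move/eqP: Ea; rewrite eqr_nat => /eqP Ea.
split; lia.
Qed.
End Spec.

Lemma Ncount n d : 0 < n -> d %| n ->
  \sum_(0 <= t < n) (gcdn t n == d) = totient (n %/ d).
Proof.
move=> n0 dn.
have d0 : 0 < d by apply: dvdn_gt0 dn.
have En : n = (n %/ d) * d by rewrite divnK.
rewrite totient_count_coprime.
rewrite [X in \sum_(0 <= t < X) _]En.
rewrite (eq_bigr (fun t => if d %| t then (gcdn t n == d) : nat else 0)); last first.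
  move=> t _; case: ifP => // ndt; case: eqP => // E.
  by move: ndt; rewrite -E dvdn_gcdl.
rewrite -big_mkcond mult_reindex //.
apply: eq_bigr => u _.
have G : gcdn (u * d) n = gcdn u (n %/ d) * d by rewrite {1}En muln_gcdl.
by rewrite G /coprime [gcdn (n %/ d) u]gcdnC -[X in _ == X](mul1n d) eqn_pmul2r.
Qed.

Definition sig_d m (y : 'I_m.+1) : 'I_m.+1 := if y %| m then inord (m %/ y) else y.

Lemma divK' m y : 0 < m -> y %| m -> m %/ (m %/ y) = y.
Proof.
move=> m0 yd; have y0 : 0 < y by apply: dvdn_gt0 yd.
by rewrite -{1}(divnK yd) mulKn // divn_gt0 // dvdn_leq.
Qed.

Lemma sig_dK m : 0 < m -> involutive (@sig_d m).
Proof.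
move=> m0 y; rewrite /sig_d.
case: (boolP (y %| m)) => yd; last by rewrite (negbTE yd).
have le : m %/ y < m.+1 by rewrite ltnS leq_div.
rewrite inordK // dvdn_div //.
apply: val_inj; rewrite /= divK' // inordK //.
Qed.

Lemma dvd_reindex m (P : pred nat) (F : nat -> nat) : 0 < m ->
  \sum_(0 <= y < m.+1 | (y %| m) && P (m %/ y)) F (m %/ y) =
  \sum_(0 <= z < m.+1 | (z %| m) && P z) F z.
Proof.
move=> m0; rewrite !big_mkord [RHS](reindex_inj (inv_inj (sig_dK m0))) /=.
apply: eq_big => y; rewrite /sig_d; case: (boolP (y %| m)) => yd /=.
- have le : m %/ y < m.+1 by rewrite ltnS leq_div.
  by rewrite inordK // dvdn_div.
- by rewrite (negbTE yd).
- have le : m %/ y < m.+1 by rewrite ltnS leq_div.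
  by rewrite inordK.
- by [].
Qed.

Lemma sum_pick n (P : pred nat) g : g < n.+1 ->
  \sum_(0 <= d < n.+1 | P d) (g == d) = P g.
Proof.
move=> gn; rewrite big_mkcond (bigD1_seq g) ?mem_index_iota ?iota_uniq //= eqxx.
rewrite big1 ?addn0; first by case: (P g).
by move=> d /negbTE; rewrite eq_sym => ->; case: ifP.
Qed.

Lemma cnt_part n (Q : pred nat) (D : {fset nat}) : 0 < n ->
  \sum_(0 <= t < n) ((gcdn t n \in D) && Q (gcdn t n)) =
  \sum_(0 <= d < n.+1 | (d \in D) && Q d && (d %| n)) totient (n %/ d).
Proof.
move=> n0.
rewrite (eq_bigr (fun t => \sum_(0 <= d < n.+1 | (d \in D) && Q d) (gcdn t n == d))); last first.
  move=> t _; rewrite sum_pick //; rewrite ltnS; apply: dvdn_leq => //; exact: dvdn_gcdr.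
rewrite exchange_big_nat [RHS]big_mkcondr /=; apply: eq_bigr => d _.
case: ifP => dn; first exact: Ncount.
rewrite big1 // => t _; case: eqP => // E; move: dn; rewrite -E dvdn_gcdr.
by [].
Qed.

Lemma odd_gcd2 m t : odd (gcdn t (2 * m)) = odd t.
Proof.
by apply: negb_inj; rewrite -!dvdn2 dvdn_gcd dvdn_mulr // andbT.
Qed.

Lemma tot2 x : odd x -> totient (2 * x) = totient x.
Proof. by move=> ox; rewrite totient_coprime ?coprime2n // mul1n. Qed.

Lemma cntO_eq m (D : {fset nat}) : odd m ->
  cntO (2 * m) D = \sum_(0 <= d < m.+1 | (d \in D) && (d %| m)) totient (m %/ d).
Proof.
move=> om; have m0 : 0 < m by case: m om.
rewrite /cntO (eq_bigr (fun t => ((gcdn t (2 * m) \in D) && odd (gcdn t (2 * m)) : nat))); last first.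
  by move=> t _; rewrite odd_gcd2.
rewrite (cnt_part odd) ?muln_gt0 //.
rewrite [RHS](big_nat_widen 0 m.+1 (2 * m).+1); last lia.
rewrite big_mkcond [RHS]big_mkcond; apply: eq_bigr => d _.
case: (boolP (d \in D)) => dD //=.
case: (boolP (odd d)) => od /=.
  have cd : coprime d 2 by rewrite coprimen2.
  rewrite Gauss_dvdr //.
  case: (boolP (d %| m)) => dm //=.
  have -> : d < m.+1 by rewrite ltnS dvdn_leq.
  by rewrite -muln_divA // tot2 // (dvdn_odd (dvdn_div dm) om).
case: (boolP (d %| m)) => dm //=.
by move: od; rewrite (dvdn_odd dm om).
Qed.

Lemma cntE_eq m (D : {fset nat}) : odd m ->
  cntE (2 * m) D = \sum_(0 <= d < m.+1 | ((2 * d) \in D) && (d %| m)) totient (m %/ d).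
Proof.
move=> om; have m0 : 0 < m by case: m om.
rewrite /cntE (eq_bigr (fun t => ((gcdn t (2 * m) \in D) && ~~ odd (gcdn t (2 * m)) : nat))); last first.
  by move=> t _; rewrite odd_gcd2.
rewrite (cnt_part (fun d => ~~ odd d)) ?muln_gt0 //.
rewrite (big_nat_widen 0 (2 * m).+1 (m.+1 * 2)); last lia.
rewrite (eq_bigl (fun d => (2 %| d) && [&& (d \in D), (d %| 2 * m) & d < (2 * m).+1])); last first.
  by move=> d; rewrite dvdn2; case: (d \in D); case: (odd d); case: (d %| 2 * m).
rewrite big_mkcondr mult_reindex // [RHS]big_mkcond; apply: eq_bigr => d _.
rewrite [2 * d]mulnC [2 * m]mulnC dvdn_pmul2r // divnMr //.
case: (d * 2 \in D) => //=.
case: (boolP (d %| m)) => dm //=.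
have -> : d * 2 < (m * 2).+1 by rewrite ltnS leq_pmul2r // dvdn_leq.
by [].
Qed.

Theorem theorem1p4 (n s : nat) (p J : nat -> nat) (D1 D2 : {fset nat}) :
  (2 <= s)%N ->
  (forall i, (i < s)%N -> prime (p i) /\ odd (p i) /\ (1 <= J i)%N) ->
  (forall i j, (i < s)%N -> (j < s)%N -> p i = p j -> i = j) ->
  (forall r, (1 <= r)%N -> (r < s)%N -> (\prod_(i < r) p i ^ J i < p r)%N) ->
  n = (2 * \prod_(i < s) p i ^ J i)%N ->
  proper_divisor_set n D1 -> proper_divisor_set n D2 ->
  same_spec (icg_adj n D1) (icg_adj n D2) ->
  D1 = D2.
Proof.
move=> s2 Hp _ Hlt En P1 P2 Hsp.
have [om PM] := Pm_prod Hp Hlt (leqnn s).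
move: om PM En; set m := \prod_(i < s) p i ^ J i => om PM En.
have m0 : 0 < m by case: (m) om.
have [HE HO] := spec_EO En m0 Hsp.
rewrite En cntO_eq // cntO_eq // in HO.
rewrite En cntE_eq // cntE_eq // in HE.
have Hsup : forall x, x < m.+1 -> x %| m ->
    \sum_(0 <= y < m.+1 | (y %| m) && (m %/ y < m %/ x)) totient (m %/ y) < totient (m %/ x).
  move=> x _ xm.
  have := dvd_reindex (fun z => z < m %/ x) totient m0; rewrite /= => ->.
  rewrite -big_nat_widen; last by rewrite leqW // leq_div.
  by apply: PM; apply: dvdn_div.
have Hinj : forall x y, x < m.+1 -> y < m.+1 -> x %| m -> y %| m -> m %/ x = m %/ y -> x = y.
  by move=> x y _ _ xm ym E; rewrite -(divK' m0 xm) E divK'.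
have GO := gen Hsup Hinj (a := fun d => (d \in D1) && (d %| m)) (b := fun d => (d \in D2) && (d %| m)).
have GE := gen Hsup Hinj (a := fun d => (2 * d \in D1) && (d %| m)) (b := fun d => (2 * d \in D2) && (d %| m)).
have rng : forall (P : bool) d, P && (d %| m) -> d < m.+1 /\ d %| m.
  by move=> P d /andP [_ dm]; split => //; rewrite ltnS dvdn_leq.
have {}GO := GO (fun d => rng _ d) (fun d => rng _ d) HO.
have {}GE := GE (fun d => rng _ d) (fun d => rng _ d) HE.
have dir : forall (A B : {fset nat}), proper_divisor_set n A ->
    (forall d, (d \in A) && (d %| m) = (d \in B) && (d %| m)) ->
    (forall d, (2 * d \in A) && (d %| m) = (2 * d \in B) && (d %| m)) ->
    forall d, d \in A -> d \in B.
  move=> A B PA EO EE d dA.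
  have [dn _] := PA d dA; rewrite En in dn.
  case: (boolP (odd d)) => od.
    have cd : coprime d 2 by rewrite coprimen2.
    have dm : d %| m by rewrite -(Gauss_dvdr m cd).
    by have := EO d; rewrite dA dm /= => /esym /andP [].
  have E2 : d = 2 * (d %/ 2) by rewrite mulnC divnK // dvdn2.
  have dm : d %/ 2 %| m by rewrite -(dvdn_pmul2l (isT : 0 < 2)) -E2.
  by have := EE (d %/ 2); rewrite -E2 dA dm /= => /esym /andP [].
apply/fsetP => d; apply/idP/idP.
  by apply: dir => // e; rewrite GO.
by apply: dir => // e; rewrite GE.
Qed.
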